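(* For any $w \in \{b,\beta\}^*$ such that $\varphi_w$ is primitive, the set $C(w) = \{\varphi_v : v = \mathrm{cyc}^k(w),\ k\in\mathbb{N}\}$ is closed under derivation.
   Context: Morphisms on $\{0,1\}^*$: $\varphi_b: 0 \mapsto 0, 1\mapsto 01$; $\varphi_\beta: 0\mapsto 10, 1 \mapsto 1$ (also $\varphi_a: 0\mapsto 0,1\mapsto 10$, $\varphi_\alpha: 0\mapsto 01, 1\mapsto 1$); for $w=w_0\cdots w_{m-1}$, $\varphi_w = \varphi_{w_0}\circ\cdots\circ\varphi_{w_{m-1}}$. For a word $u = u_0u_1\cdots u_{n-1}$, $\mathrm{cyc}(u) = u_1\cdots u_{n-1}u_0$. A morphism is primitive if some power maps every letter to a word containing every letter; a substitution is a morphism $\psi$ with a letter $c$ such that $\psi(c)=cx$, $x$ nonempty, $|\psi^n(c)|\to\infty$. Derived word: for a uniformly recurrent word $\mathbf{u}$ and a factor $v$, a return word of $v$ is a factor $r$ such that $rv$ is a factor in which $v$ occurs exactly twice (as prefix and suffix); if $r_0,\dots,r_k$ are all return words, write $\mathbf{u}=p\,r_{s_0}r_{s_1}\cdots$ with $|p|$ the first occurrence of $v$; $\mathbf{d}_{\mathbf{u}}(v)=s_0s_1\cdots$, up to permutation of letters. A finite set $M$ of primitive substitutions is closed under derivation if for every $\varphi\in M$, every fixed point $\mathbf{u}$ of $\varphi$ and every factor $v$ of $\mathbf{u}$, $\mathbf{d}_{\mathbf{u}}(v)$ is fixed by some $\psi\in M$. *)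

(* Defs.v *)
From Stdlib Require List.
From mathcomp Require Import all_boot.
Set Implicit Arguments. Unset Strict Implicit. Unset Printing Implicit Defensive.

(* Alphabet {0,1} is encoded as bool: 0 = false, 1 = true. *)

Definition morphism := bool -> seq bool.

Definition app (phi : morphism) (s : seq bool) : seq bool := flatten (map phi s).

Inductive gen := Gb | Gbeta.

Definition phi_gen (g : gen) : morphism :=
  match g with
  | Gb => fun c => if c then [:: false; true] else [:: false]
  | Gbeta => fun c => if c then [:: true] else [:: true; false]
  end.

Definition phi_word (w : seq gen) : morphism :=
  foldr (fun g acc => fun c => app (phi_gen g) (acc c)) (fun c => [:: c]) w.

Definition cyc {T : Type} (u : seq T) : seq T := rot 1 u.

Definition mpow (psi : morphism) (n : nat) (c : bool) : seq bool :=
  iter n (app psi) [:: c].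

Definition primitive (psi : morphism) : Prop :=
  exists n, 0 < n /\ forall a c : bool, c \in mpow psi n a.

Definition substitution (psi : morphism) : Prop :=
  exists c x, x <> [::] /\ psi c = c :: x /\
    (forall N, exists n, N <= size (mpow psi n c)).

Definition pre (u : nat -> bool) (n : nat) : seq bool := mkseq u n.

Definition fixed_point (phi : morphism) (u : nat -> bool) : Prop :=
  forall n, app phi (pre u n) = pre u (size (app phi (pre u n))).

Definition occurs_at (u : nat -> bool) (v : seq bool) (i : nat) : Prop :=
  mkseq (fun j => u (i + j)) (size v) = v.

Definition factor (v : seq bool) (u : nat -> bool) : Prop :=
  exists i, occurs_at u v i.


Definition count_occ (s v : seq bool) : nat :=
  count (fun i => take (size v) (drop i s) == v) (iota 0 (size s - size v).+1).

Definition return_word (u : nat -> bool) (v r : seq bool) : Prop :=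
  factor (r ++ v) u /\ count_occ (r ++ v) v = 2 /\ take (size v) (r ++ v) = v.

(* d is the derived sequence of u w.r.t. v, coded by the return words
   themselves: u = p d_0 d_1 d_2 ... with |p| the first occurrence of v *)
Definition derived_seq (u : nat -> bool) (v : seq bool) (d : nat -> seq bool) : Prop :=
  exists p : seq bool,
    occurs_at u v (size p) /\ (forall i, i < size p -> ~ occurs_at u v i) /\
    (forall n, let s := p ++ flatten (mkseq d n) in s = pre u (size s)) /\
    (forall j, return_word u v (d j)).

(* finite set M (given as a list) of morphisms closed under derivation;
   the derived word is considered up to a bijective renaming of its letters
   (the return words) onto {0,1} *)
Definition closed_under_derivation (M : list morphism) : Prop :=
  (forall psi, List.In psi M -> primitive psi /\ substitution psi) /\
  (forall phi u v d, List.In phi M -> fixed_point phi u -> factor v u ->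
     derived_seq u v d ->
     exists psi, List.In psi M /\
       exists sigma : seq bool -> bool,
         (forall j k, sigma (d j) = sigma (d k) -> d j = d k) /\
         fixed_point psi (fun j => sigma (d j))).

(* C(w) = { phi_v : v = cyc^k(w), k in N }; since cyc^(|w|) w = w it suffices
   to take k < |w| (and k = 0 when w is empty) *)
Definition Cset (w : seq gen) : list morphism :=
  map (fun k => phi_word (iter k cyc w)) (iota 0 (size w).+1).

(* Main.v *)
Require Import Defs.
From mathcomp Require Import all_boot zify.
From Stdlib Require Import ClassicalEpsilon.
Set Implicit Arguments. Unset Strict Implicit. Unset Printing Implicit Defensive.

Lemma app_cons (f : morphism) x s : app f (x :: s) = f x ++ app f s.
Proof. by []. Qed.
Lemma app_cat (f : morphism) s t : app f (s ++ t) = app f s ++ app f t.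
Proof. by rewrite /app map_cat flatten_cat. Qed.
Lemma app_comp (f h : morphism) s : app (fun c => app f (h c)) s = app f (app h s).
Proof. elim: s => [//|x s IH]; by rewrite !app_cons IH app_cat. Qed.
Lemma app_id s : app (fun c => [:: c]) s = s.
Proof. elim: s => [//|x s IH]; by rewrite app_cons IH. Qed.
Lemma eq_app (f g : morphism) s : f =1 g -> app f s = app g s.
Proof. by move=> H; rewrite /app (eq_map H). Qed.
Lemma size_app_ge (f : morphism) s : (forall c, 0 < size (f c)) -> size s <= size (app f s).
Proof. move=> H; elim: s => [//|x s IH]; rewrite app_cons size_cat /=. have := H x; lia. Qed.

Definition slice (u : nat -> bool) i j := mkseq (fun t => u (i + t)) (j - i).
Lemma size_pre u n : size (pre u n) = n.
Proof. by rewrite size_mkseq. Qed.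
Lemma nth_pre u n i x0 : i < n -> nth x0 (pre u n) i = u i.
Proof. by move=> H; rewrite nth_mkseq. Qed.
Lemma size_slice u i j : size (slice u i j) = j - i.
Proof. by rewrite size_mkseq. Qed.
Lemma nth_slice u i j t x0 : t < j - i -> nth x0 (slice u i j) t = u (i + t).
Proof. by move=> H; rewrite nth_mkseq. Qed.
Lemma pre_split u i j : i <= j -> pre u j = pre u i ++ slice u i j.
Proof.
move=> Hij; apply: (eq_from_nth (x0:=false)); first by rewrite size_cat !size_mkseq; lia.
move=> t; rewrite size_pre => Ht; rewrite nth_pre // nth_cat size_pre.
case: ltnP => H; first by rewrite nth_pre.
rewrite nth_slice; [congr u; lia | lia].
Qed.
Lemma take_pre u m n : m <= n -> take m (pre u n) = pre u m.
Proof. move=> H; by rewrite (pre_split u H) take_size_cat ?size_mkseq. Qed.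
Lemma pre_prefix u N s r : pre u N = s ++ r -> s = pre u (size s).
Proof.
move=> H; have Hs : size s <= N by rewrite -(size_pre u N) H size_cat; lia.
by rewrite -(take_pre u Hs) H take_size_cat.
Qed.
Lemma occursP u v i : occurs_at u v i <-> forall t, t < size v -> u (i + t) = nth false v t.
Proof.
rewrite /occurs_at; split.
  by move=> <- t Ht; rewrite nth_mkseq //; rewrite size_mkseq in Ht.
move=> H; apply: (eq_from_nth (x0:=false)); first by rewrite size_mkseq.
by move=> t; rewrite size_mkseq => Ht; rewrite nth_mkseq // H.
Qed.
Lemma occurs_cons u x s i : occurs_at u (x :: s) i <-> u i = x /\ occurs_at u s i.+1.
Proof.
rewrite !occursP; split.
  move=> H; split; first by have := H 0 isT; rewrite addn0.
  by move=> t Ht; have := H t.+1 Ht; rewrite addnS.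
move=> [H1 H2] [|t] Ht; first by rewrite addn0.
by rewrite addnS H2.
Qed.
Lemma occurs_nil u i : occurs_at u [::] i.
Proof. by []. Qed.
Lemma slice_cons u i j : i < j -> slice u i j = u i :: slice u i.+1 j.
Proof.
move=> H; apply: (eq_from_nth (x0:=false)); first by rewrite /= !size_slice; lia.
move=> [|t]; rewrite size_slice => Ht; first by rewrite nth_slice // addn0.
by rewrite /= !nth_slice; [congr u; lia|lia|lia].
Qed.
Lemma slice_rcons u i j : i <= j -> slice u i j.+1 = rcons (slice u i j) (u j).
Proof.
move=> H; apply: (eq_from_nth (x0:=false)); first by rewrite size_rcons !size_slice; lia.
move=> t; rewrite size_slice => Ht; rewrite nth_slice // nth_rcons size_slice.
case: ltnP => H2; first by rewrite nth_slice.
have -> : t = j - i by lia. rewrite eqxx; congr u; lia.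
Qed.
Lemma occurs_slice u v i : occurs_at u v i <-> slice u i (i + size v) = v.
Proof. by rewrite /slice addKn. Qed.
Lemma slice_split u i j k : i <= j -> j <= k -> slice u i k = slice u i j ++ slice u j k.
Proof.
move=> H1 H2; apply: (eq_from_nth (x0:=false)); first by rewrite size_cat !size_slice; lia.
move=> t; rewrite size_slice => Ht; rewrite nth_slice // nth_cat size_slice.
case: ltnP => H; first by rewrite nth_slice.
rewrite nth_slice; [congr u; lia|lia].
Qed.

Definition img (phi : morphism) (u' u : nat -> bool) :=
  forall n, app phi (pre u' n) = pre u (size (app phi (pre u' n))).
Definition incr (c : nat -> nat) := forall j, c j < c j.+1.
Definition enum_occ u v c := incr c /\ forall i, occurs_at u v i <-> exists j, c j = i.
Definition seg u (c : nat -> nat) j := slice u (c j) (c j.+1).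
Definition samepat {T1 T2 : Type} (f : nat -> T1) (g : nat -> T2) :=
  forall j k, f j = f k <-> g j = g k.
Lemma samepat_trans {T1 T2 T3 : Type} (f : nat -> T1) (g : nat -> T2) (h : nat -> T3) :
  samepat f g -> samepat g h -> samepat f h.
Proof. move=> H1 H2 j k; rewrite H1; exact: H2. Qed.

Lemma incr_mono c (H : incr c) i j : i < j -> c i < c j.
Proof.
elim: j => [//|j IH]; rewrite ltnS leq_eqVlt => /orP [/eqP ->|Hl].
  exact: H.
exact: ltn_trans (IH Hl) (H j).
Qed.
Lemma incr_le c (H : incr c) i j : i <= j -> c i <= c j.
Proof.
rewrite leq_eqVlt => /orP [/eqP ->//|Hl]. exact (ltnW (incr_mono H Hl)).
Qed.
Lemma incr_inj c (H : incr c) i j : c i = c j -> i = j.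
Proof.
move=> E; case: (ltngtP i j) => // Hl.
  by have := incr_mono H Hl; rewrite E ltnn.
by have := incr_mono H Hl; rewrite E ltnn.
Qed.
Lemma incr_ltP c (H : incr c) i j : (c i < c j) = (i < j).
Proof.
case: (ltngtP i j) => Hl.
- exact (incr_mono H Hl).
- apply/negbTE; rewrite -leqNgt; apply: ltnW; exact (incr_mono H Hl).
- by rewrite Hl ltnn.
Qed.

Fixpoint dec (a : bool) (s : seq bool) : seq bool :=
  match s with
  | x :: s' => match s' with
              | y :: s'' => if y == a then a :: dec a s' else y :: dec a s''
              | [::] => [::]
              end
  | [::] => [::]
  end.
Fixpoint wf (a : bool) (s : seq bool) : bool :=
  match s with
  | x :: s' => (x == a) && match s' with
      | y :: s'' => if y == a then wf a s' else wf a s''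
      | [::] => true end
  | [::] => true
  end.

Lemma size_dec a s : size (dec a s) + (s != [::]) <= size s.
Proof.
move: {2}(size s) (leqnn (size s)) => n; elim: n s => [|n IH] [|x [|y s]] //=.
case: eqP => _ /=.
  move=> H; have := IH (y :: s) H; rewrite /=; lia.
move=> H; have := IH s; case: s H => [|z s] /= H; first by lia.
move=> H2; have := H2 (ltnW H); lia.
Qed.

Section Block.
Variables (a : bool) (phi : morphism) (u' u : nat -> bool).
Hypothesis Hphi : forall c, phi c = if c == a then [:: a] else [:: a; c].
Hypothesis Himg : img phi u' u.

Definition P i := size (app phi (pre u' i)).

Lemma pre_S (w : nat -> bool) i : pre w i.+1 = pre w i ++ [:: w i].
Proof. by rewrite /pre mkseqS cats1. Qed.
Lemma app1 x : app phi [:: x] = phi x.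
Proof. by rewrite app_cons cats0. Qed.

Lemma PS i : P i.+1 = P i + (if u' i == a then 1 else 2).
Proof. by rewrite /P pre_S app_cat app1 size_cat Hphi; case: eqP. Qed.
Lemma P0 : P 0 = 0.
Proof. by []. Qed.
Lemma P_incr : incr P.
Proof. move=> i; rewrite PS; case: eqP => _; lia. Qed.
Lemma P_inj i j : P i = P j -> i = j.
Proof. exact (fun E => incr_inj P_incr E). Qed.

Lemma pre_PS i : pre u (P i.+1) = pre u (P i) ++ phi (u' i).
Proof. by rewrite -Himg /P pre_S app_cat app1 -Himg. Qed.

Lemma uP i : u (P i) = a.
Proof.
have H := pre_PS i.
have Hl : P i < P i.+1 by apply: P_incr.
have := congr1 (nth false ^~ (P i)) H.
by rewrite nth_pre // nth_cat size_pre ltnn subnn Hphi; case: eqP.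
Qed.
Lemma uP1 i : u' i != a -> u (P i).+1 = u' i /\ P i.+1 = (P i).+2.
Proof.
move=> Hn; have H := pre_PS i.
have HS : P i.+1 = (P i).+2 by rewrite PS (negbTE Hn); lia.
split=> //.
have := congr1 (nth false ^~ (P i).+1) H.
rewrite nth_pre ?HS // nth_cat size_pre ltnNge leqnSn /= Hphi (negbTE Hn).
by have -> : (P i).+1 - P i = 1 by lia.
Qed.
Lemma uPa i : u' i = a -> P i.+1 = (P i).+1.
Proof. by move=> E; rewrite PS E eqxx addn1. Qed.

Lemma slice_P i j : i <= j -> slice u (P i) (P j) = app phi (slice u' i j).
Proof.
move=> H.
have Hle : P i <= P j by apply: incr_le P_incr _ _ H.
have E : pre u (P j) = pre u (P i) ++ app phi (slice u' i j).
  by rewrite -Himg /P (pre_split u' H) app_cat -Himg.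
have := congr1 (drop (P i)) E; rewrite drop_size_cat ?size_pre //.
by rewrite (pre_split u Hle) drop_size_cat ?size_pre.
Qed.

Lemma P_cover n : exists i, P i <= n < P i.+1.
Proof.
elim: n => [|n [i Hi]]; first by exists 0; rewrite P0 /=; apply: P_incr.
case: (ltnP n.+1 (P i.+1)) => H; first by exists i; lia.
exists i.+1; have := P_incr i.+1; lia.
Qed.
Lemma u_a_block n : u n = a -> exists i, n = P i.
Proof.
move=> Hn; have [i Hi] := P_cover n.
case: (eqVneq n (P i)) => [->|Hne]; first by exists i.
case: (eqVneq (u' i) a) => Ha.
  by move: Hi; rewrite (uPa Ha); lia.
have [H1 H2] := uP1 Ha.
have En : n = (P i).+1 by move: Hi; rewrite H2; lia.
by move: Ha; rewrite -H1 -En Hn eqxx.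
Qed.
Lemma u_na_prev n : u n != a -> 0 < n /\ u n.-1 = a.
Proof.
move=> Hn; have [i Hi] := P_cover n.
case: (eqVneq n (P i)) => [E|Hne]; first by move: Hn; rewrite E uP eqxx.
have HS : P i.+1 <= (P i).+2 by rewrite PS; case: eqP => _; lia.
split; first by lia.
have -> : n.-1 = P i by lia.
by rewrite uP.
Qed.

Lemma app_hd s : s != [::] -> head a (app phi s) = a.
Proof. by case: s => [//|x s] _; rewrite app_cons Hphi; case: eqP. Qed.
Lemma app_nil_inv s : app phi s = [::] -> s = [::].
Proof. by case: s => [//|x s]; rewrite app_cons Hphi; case: eqP. Qed.

Lemma app_inj s t : app phi s = app phi t -> s = t.
Proof.
elim: s t => [|x s IH] [|y t] //.
- by move=> H; have := app_nil_inv (esym H).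
- by move=> H; have := app_nil_inv H.
rewrite !app_cons !Hphi.
case: (eqVneq x a) => Hx; case: (eqVneq y a) => Hy /=.
- by move=> [] /IH ->; rewrite Hx Hy.
- move=> [] H; case: s H {IH} => [//|z s] H.
  by have := app_hd (s:=z::s) isT; rewrite H /= => E; move: Hy; rewrite E eqxx.
- move=> [] H; case: t H {IH} => [//|z t] H.
  by have := app_hd (s:=z::t) isT; rewrite -H /= => E; move: Hx; rewrite E eqxx.
- by move=> [] E /IH ->; rewrite E.
Qed.

Lemma L1 s i : (s = [::] \/ head a s = a) -> occurs_at u s (P i) ->
  wf a s /\ occurs_at u' (dec a s) i.
Proof.
move: {2}(size s) (leqnn (size s)) => n; elim: n s i => [|n IH] s i.
  by case: s.
case: s => [|x [|y s]] //= Hsz.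
  by move=> [//|->] _; rewrite eqxx.
move=> [//|Hx]; subst x.
rewrite occurs_cons occurs_cons => [[_ [Hy Hs]]].
case: (eqVneq y a) => Hya.
  case: (eqVneq (u' i) a) => Hu.
    have Hsz' : size (y :: s) <= n by move: Hsz => /=; lia.
    have Hh : head a (y :: s) = a by rewrite Hya.
    have Ho' : occurs_at u (y :: s) (P i.+1) by rewrite occurs_cons uPa // -Hy.
    have [Hw Ho] := IH (y :: s) i.+1 Hsz' (or_intror Hh) Ho'.
    rewrite eqxx Hya /= eqxx in Hw *; split=> //.
    by rewrite occurs_cons Hu.
  have [H1 _] := uP1 Hu; by move: Hu; rewrite -H1 Hy Hya eqxx.
case: (eqVneq (u' i) a) => Hu.
  by move: Hya; rewrite -Hy -(uPa Hu) uP eqxx.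
have [H1 H2] := uP1 Hu.
have Hsz' : size s <= n by move: Hsz => /=; lia.
have Ho' : occurs_at u s (P i.+1) by rewrite H2.
have Hh : s = [::] \/ head a s = a.
  case: s Ho' {Hs Hsz Hsz'} => [|z s]; [by left | right] => /=.
  by move: Ho'; rewrite occurs_cons uP => -[->].
have [Hw Ho] := IH s i.+1 Hsz' Hh Ho'.
rewrite eqxx /=; split=> //.
rewrite occurs_cons; split=> //. by rewrite -H1 Hy.
Qed.

Lemma wfE2 x y s : wf a (x :: y :: s) = (x == a) && (if y == a then wf a (y :: s) else wf a s).
Proof. by []. Qed.
Lemma decE2 x y s : dec a (x :: y :: s) = if y == a then a :: dec a (y :: s) else y :: dec a s.
Proof. by []. Qed.

Lemma L2 s i : wf a s -> occurs_at u' (dec a s) i -> occurs_at u s (P i).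
Proof.
move: {2}(size s) (leqnn (size s)) => n; elim: n s i => [|n IH] s i.
  by case: s.
case: s => [|x [|y s]] Hsz //.
  by move=> /= /andP [/eqP -> _] _; rewrite occurs_cons uP.
rewrite wfE2 decE2 => /andP [/eqP Hx]; subst x.
case: (eqVneq y a) => Hya Hw.
  subst y; rewrite occurs_cons => -[Hu Ho].
  have Hsz' : size (a :: s) <= n by move: Hsz => /=; lia.
  have := IH (a :: s) i.+1 Hsz' Hw Ho.
  by rewrite (uPa Hu) => Ho2; rewrite occurs_cons uP.
rewrite occurs_cons => -[Hu Ho].
have Hua : u' i != a by rewrite Hu.
have [H1 H2] := uP1 Hua.
have Hsz' : size s <= n by move: Hsz => /=; lia.
have := IH s i.+1 Hsz' Hw Ho.
by rewrite H2 => Ho2; rewrite !occurs_cons uP H1 Hu.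
Qed.

Lemma T1 v c : v != [::] -> head a v = a -> enum_occ u v c ->
  exists c', enum_occ u' (dec a v) c' /\ samepat (seg u c) (seg u' c').
Proof.
move=> Hv Hh [Hinc Hocc].
have Hoc j : occurs_at u v (c j) by apply/Hocc; exists j.
have HPc j : exists i, P i == c j.
  have := Hoc j; case: v Hv Hh {Hocc Hoc} => [//|x v] _ /= ->.
  by rewrite occurs_cons => -[/u_a_block [i ->] _]; exists i.
pose c' j := ex_minn (HPc j).
have Pc' j : P (c' j) = c j.
  by rewrite /c'; case: ex_minnP => m /eqP.
have Hinc' : incr c'.
  by move=> j; rewrite -(incr_ltP P_incr) !Pc'; apply: Hinc.
have Hwf : wf a v.
  have := Hoc 0; rewrite -Pc' => /L1 [] //; by right.
exists c'; split; first split=> //.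
  move=> i; split.
    move=> /(L2 Hwf); rewrite Hocc => -[j Hj]; exists j.
    by apply: P_inj; rewrite Pc'.
  move=> [j <-]; have := Hoc j; rewrite -Pc' => /L1 [] //; by right.
move=> j k; rewrite /seg -!Pc' !slice_P; try by apply: ltnW; apply: Hinc'.
split; last by move=> ->.
exact: app_inj.
Qed.

Lemma seg_shift i k : 0 < i < k -> u i.-1 = a -> u k.-1 = a ->
  slice u i k = rcons (slice u i k.-1) a /\ slice u i.-1 k.-1 = a :: slice u i k.-1.
Proof.
move=> Hik H1 H2; split.
  by rewrite -{1}(prednK (n:=k)) ?slice_rcons ?H2 //; lia.
by rewrite slice_cons ?H1 ?prednK //; lia.
Qed.

Lemma Sh v c : head a v != a -> v != [::] -> enum_occ u v c ->
  enum_occ u (a :: v) (fun j => (c j).-1) /\ samepat (seg u c) (seg u (fun j => (c j).-1)).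
Proof.
move=> Hh Hv [Hinc Hocc].
have Hoc j : occurs_at u v (c j) by apply/Hocc; exists j.
have Hc j : 0 < c j /\ u (c j).-1 = a.
  apply: u_na_prev; have := Hoc j; case: v Hv Hh {Hocc Hoc} => [//|x v] _ /= Hx.
  by rewrite occurs_cons => -[->].
split; first split.
- by move=> j; have := Hinc j; have := Hc j; have := Hc j.+1; lia.
- move=> n; rewrite occurs_cons; split.
    by move=> [_ /Hocc [j Hj]]; exists j; rewrite Hj.
  move=> [j <-]; have [H0 H1] := Hc j; split=> //.
  by rewrite prednK.
move=> j k; rewrite /seg.
have Hj := Hinc j; have Hk := Hinc k.
have [Ej1 Ej2] := seg_shift (i:=c j) (k:=c j.+1) ltac:(have := Hc j; lia) (proj2 (Hc j)) (proj2 (Hc j.+1)).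
have [Ek1 Ek2] := seg_shift (i:=c k) (k:=c k.+1) ltac:(have := Hc k; lia) (proj2 (Hc k)) (proj2 (Hc k.+1)).
rewrite Ej1 Ej2 Ek1 Ek2; split.
  by move=> /rcons_inj [->].
by move=> [->].
Qed.

End Block.

Definition letter (g : gen) : bool := if g is Gb then false else true.
Lemma phi_genE g c : phi_gen g c = if c == letter g then [:: letter g] else [:: letter g; c].
Proof. by case: g; case: c. Qed.

Lemma phi_word_rcons w g c : phi_word (w ++ [:: g]) c = app (phi_word w) (phi_gen g c).
Proof.
elim: w c => [|h w IH] c /=; first by rewrite app_id app_cons cats0.
by rewrite IH -app_comp.
Qed.
Lemma phi_word_ne w c : 0 < size (phi_word w c).
Proof.
elim: w c => [//|h w IH] c /=.
apply: leq_trans (IH c) _; apply: size_app_ge => x; by rewrite phi_genE; case: eqP.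
Qed.

Lemma fixed_point_ext (phi psi : morphism) u : phi =1 psi -> fixed_point phi u -> fixed_point psi u.
Proof. by move=> E H n; have := H n; rewrite !(eq_app (pre u n) E). Qed.
Lemma pre_ext (u1 u2 : nat -> bool) n : u1 =1 u2 -> pre u1 n = pre u2 n.
Proof. by move=> E; apply: eq_mkseq. Qed.
Lemma fixed_point_wext (phi : morphism) u1 u2 : u1 =1 u2 -> fixed_point phi u1 -> fixed_point phi u2.
Proof. by move=> E H n; have := H n; rewrite !(pre_ext _ E). Qed.

Lemma app_prefix (R : morphism) u n m : n <= m -> exists r, app R (pre u m) = app R (pre u n) ++ r.
Proof. by move=> H; exists (app R (slice u n m)); rewrite (pre_split u H) app_cat. Qed.

Lemma desub g w u : fixed_point (phi_word (g :: w)) u ->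
  exists u', img (phi_gen g) u' u /\ fixed_point (phi_word (w ++ [:: g])) u'.
Proof.
move=> Hfix.
set R := phi_word w; set G := phi_gen g.
have HR c : 0 < size (R c) by apply: phi_word_ne.
have HszR s : size s <= size (app R s) by apply: size_app_ge.
pose u' n := nth false (app R (pre u n.+1)) n.
have Hpre n M : n <= M -> pre u' n = take n (app R (pre u M)).
  move=> HnM; apply: (eq_from_nth (x0:=false)).
    rewrite size_pre size_take; have := HszR (pre u M); rewrite size_pre; case: ltnP; lia.
  move=> i; rewrite size_pre => Hi; rewrite nth_pre // nth_take //.
  have [r Er] := app_prefix R u (n:=i.+1) (m:=M) ltac:(lia).
  rewrite /u' Er nth_cat; have := HszR (pre u i.+1); rewrite size_pre => Hs.
  by rewrite ifT //; lia.
have Hcomp s : app (phi_word (g :: w)) s = app G (app R s) by rewrite -app_comp.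
have Himg : img G u' u.
  move=> n; rewrite (Hpre n n (leqnn n)).
  have := Hfix n; rewrite Hcomp -{1 2}(cat_take_drop n (app R (pre u n))) app_cat.
  by move=> /esym /pre_prefix.
exists u'; split=> // n.
have E : app (phi_word (w ++ [:: g])) (pre u' n) = app R (pre u (size (app G (pre u' n)))).
  rewrite -Himg -app_comp; apply: eq_app => c; by rewrite phi_word_rcons.
rewrite E; set N := size (app G (pre u' n)).
have HNm : N <= size (app R (pre u N)) by have := HszR (pre u N); rewrite size_pre.
rewrite (Hpre _ _ (leqnn _)).
have [r Er] := app_prefix R u HNm.
by rewrite Er take_size_cat.
Qed.

Lemma In_map_iota (f : nat -> morphism) k m n : m <= k < m + n -> List.In (f k) (map f (iota m n)).
Proof.
elim: n m => [|n IH] m; first by lia.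
move=> H /=; case: (eqVneq k m) => [->|Hne]; first by left.
right; apply: IH; lia.
Qed.
Lemma In_map_iota_inv (f : nat -> morphism) psi m n : List.In psi (map f (iota m n)) ->
  exists k, m <= k < m + n /\ psi = f k.
Proof.
elim: n m => [//|n IH] m /= [<-|H]; first by exists m; split=> //; lia.
have [k [Hk ->]] := IH _ H; exists k; split=> //; lia.
Qed.

Lemma cyc_cons (g : gen) w : cyc (g :: w) = w ++ [:: g].
Proof. by rewrite /cyc /rot /= drop0 take0. Qed.
Lemma iter_cyc (s : seq gen) k : k <= size s -> iter k cyc s = rot k s.
Proof.
elim: k => [|k IH] H; first by rewrite rot0.
rewrite iterS IH; last by lia.
rewrite /cyc rot_add_mod; try lia.
by rewrite ifT; [rewrite add1n | lia].
Qed.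
Lemma In_Cset s k : k <= size s -> List.In (phi_word (iter k cyc s)) (Cset s).
Proof. by move=> H; apply: (In_map_iota (fun k => phi_word (iter k cyc s))); lia. Qed.
Lemma Cset_cyc s psi : List.In psi (Cset (cyc s)) -> List.In psi (Cset s).
Proof.
case: s => [//|g w].
rewrite {1}/Cset => /In_map_iota_inv [j [Hj ->]].
rewrite -iterSr.
have Hs : size (cyc (g :: w)) = size (g :: w) by apply: size_rot.
rewrite Hs in Hj.
case: (ltnP j (size (g :: w))) => Hj2.
  by apply: In_Cset; lia.
have -> : j = size (g :: w) by lia.
rewrite iterS iter_cyc // rot_size.
by apply: (In_Cset (k := 1)).
Qed.
Lemma Cset_iter s k psi : List.In psi (Cset (iter k cyc s)) -> List.In psi (Cset s).
Proof. elim: k => [//|k IH] H; apply: IH; apply: Cset_cyc; by rewrite -iterS. Qed.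

Lemma mem_app (f : morphism) s c : (c \in app f s) = has (fun x => c \in f x) s.
Proof. by elim: s => [//|x s IH]; rewrite app_cons mem_cat IH. Qed.
Lemma app_sub (f : morphism) s t : (forall c, c \in s -> c \in t) ->
  forall c, c \in app f s -> c \in app f t.
Proof.
move=> H c; rewrite !mem_app => /hasP [x Hx Hc]; apply/hasP; exists x => //; exact: H.
Qed.
Lemma iter_sub (f : morphism) n s t : (forall c, c \in s -> c \in t) ->
  forall c, c \in iter n (app f) s -> c \in iter n (app f) t.
Proof. elim: n => [//|n IH] H /=; apply: app_sub; exact: IH. Qed.
Lemma app_keep (f : morphism) s c : (forall c, c \in f c) -> c \in s -> c \in app f s.
Proof. by move=> H Hc; rewrite mem_app; apply/hasP; exists c. Qed.
Lemma phi_word_keep w c : c \in phi_word w c.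
Proof.
elim: w c => [|h w IH] c /=; first by rewrite inE.
apply: app_keep (IH c) => x; rewrite phi_genE; case: eqP => [->|_]; by rewrite !inE eqxx ?orbT.
Qed.

Lemma iter_comp (G R : morphism) n s :
  iter n.+1 (app (fun c => app R (G c))) s = app R (iter n (app (fun c => app G (R c))) (app G s)).
Proof.
elim: n s => [|n IH] s; first by rewrite /= app_comp.
by rewrite iterS IH app_comp /= app_comp.
Qed.

Lemma mpow_fix (psi : morphism) a n : psi a = [:: a] -> mpow psi n a = [:: a].
Proof. move=> H; elim: n => [//|n IH]; by rewrite /mpow iterS -/(mpow psi n a) IH app_cons H. Qed.

Lemma prim_cyc g w : primitive (phi_word (g :: w)) -> primitive (phi_word (w ++ [:: g])).
Proof.
move=> [n [Hn H]]; exists n.+1; split=> // a c.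
have E : mpow (phi_word (w ++ [:: g])) n.+1 a =
   app (phi_word w) (iter n (app (phi_word (g :: w))) (app (phi_gen g) [:: a])).
  rewrite /mpow -iter_comp; apply: eq_iter => s; apply: eq_app => x.
  by rewrite phi_word_rcons.
rewrite E; apply: app_keep; first by move=> x; apply: phi_word_keep.
apply: (iter_sub (s := [:: letter g])); last exact: H.
by move=> x; rewrite inE => /eqP ->; rewrite app_cons phi_genE mem_cat; case: eqP; rewrite !inE eqxx.
Qed.

Lemma prim_nil : ~ primitive (phi_word [::]).
Proof.
move=> [n [_ H]]; have := H false true.
by rewrite mpow_fix.
Qed.

Lemma prim_iter w k : primitive (phi_word w) -> primitive (phi_word (iter k cyc w)).
Proof.
move=> H; elim: k => [//|k IH]; rewrite iterS.
case E: (iter k cyc w) IH => [|g s] IH; first by case: (prim_nil IH).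
by rewrite cyc_cons; apply: prim_cyc.
Qed.

Lemma subst_prim w : primitive (phi_word w) -> substitution (phi_word w).
Proof.
case: w => [/prim_nil //|g w] Hp.
set a := letter g.
have Hhead c : exists t, phi_word (g :: w) c = a :: t.
  rewrite /=; have := phi_word_ne w c; case: (phi_word w c) => [//|x s] _.
  rewrite app_cons phi_genE; case: eqP => _; by eexists.
have [t Ht] := Hhead a.
have Htne : t <> [::].
  move=> Et; move: Hp => [n [_ H]]; have := H a (~~ a).
  by rewrite mpow_fix ?Ht ?Et // inE; move: (a) => b; case: b.
exists a, t; split=> //; split=> //.
have Hgrow n : exists s, mpow (phi_word (g :: w)) n a = a :: s /\ n <= size s.
  elim: n => [|n [s [Es Hs]]]; first by exists [::].
  rewrite /mpow iterS -/(mpow _ n a) Es app_cons Ht.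
  exists (t ++ app (phi_word (g :: w)) s); split=> //.
  rewrite size_cat; have := size_app_ge (f := phi_word (g :: w)) s (phi_word_ne (g :: w)).
  case: t Htne {Ht} => [//|? t] _ /=; lia.
move=> N; have [s [Es Hs]] := Hgrow N; exists N; rewrite Es /=; lia.
Qed.

Lemma has_letters w : primitive (phi_word w) -> forall x, has (fun g => letter g == x) w.
Proof.
move=> Hp x; apply/negPn/negP => Hn.
have E : phi_word w (~~ x) = [:: ~~ x].
  elim: w Hn {Hp} => [//|g w IH] /= /norP [Hg Hw].
  rewrite IH // app_cons cats0 phi_genE.
  have -> : letter g = ~~ x by move: Hg; move: (letter g) (x) => l y; case: l; case: y.
  by rewrite eqxx.
move: Hp => [n [_ H]]; have := H (~~ x) x.
by rewrite mpow_fix // inE; move: (x) => y; case: y.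
Qed.

Lemma slice_drop u A B q : drop q (slice u A B) = slice u (A + q) B.
Proof.
apply: (eq_from_nth (x0:=false)); first by rewrite size_drop !size_slice; lia.
move=> t; rewrite size_drop size_slice => Ht; rewrite nth_drop !nth_slice; [congr u; lia|lia|lia].
Qed.
Lemma slice_take u A B m : A + m <= B -> take m (slice u A B) = slice u A (A + m).
Proof.
move=> H; have Hs : m <= size (slice u A B) by rewrite size_slice; lia.
apply: (eq_from_nth (x0:=false)); first by rewrite size_takel // !size_slice; lia.
move=> t; rewrite size_takel // => Ht; rewrite nth_take //.
by rewrite !nth_slice //; move: Hs; rewrite size_slice; lia.
Qed.

Lemma count3 (p : pred nat) x y z n : p x -> p y -> p z -> x < y -> y < z -> z < n ->
  3 <= count p (iota 0 n).
Proof.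
move=> Hx Hy Hz H1 H2 H3.
have -> : n = y + ((z - y) + (n - z)) by lia.
rewrite !iotaD !count_cat.
have C1 : 0 < count p (iota 0 y) by rewrite -has_count; apply/hasP; exists x => //; rewrite mem_iota; lia.
have C2 : 0 < count p (iota (0 + y) (z - y)) by rewrite -has_count; apply/hasP; exists y => //; rewrite mem_iota; lia.
have C3 : 0 < count p (iota (0 + y + (z - y)) (n - z)) by rewrite -has_count; apply/hasP; exists z => //; rewrite mem_iota; lia.
lia.
Qed.

Lemma incr_cover c : incr c -> forall n, exists j, c j <= c 0 + n < c j.+1.
Proof.
move=> H; elim=> [|n [j Hj]]; first by exists 0; rewrite addn0 leqnn /=; apply: H.
case: (ltnP (c 0 + n.+1) (c j.+1)) => H2; first by exists j; lia.
by exists j.+1; have := H j.+1; lia.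
Qed.

Lemma derived_enum u v d : derived_seq u v d -> exists c, enum_occ u v c /\ forall j, d j = seg u c j.
Proof.
move=> [p [Hp0 [Hpnot [Hpre Hret]]]].
pose c j := size p + size (flatten (mkseq d j)).
have cS j : c j.+1 = c j + size (d j).
  by rewrite /c mkseqS -cats1 flatten_cat size_cat /= cats0 addnA.
have Hd j : d j = seg u c j.
  have Hc0 : size (p ++ flatten (mkseq d j)) = c j by rewrite size_cat.
  have Hc1 : size (p ++ flatten (mkseq d j.+1)) = c j.+1 by rewrite size_cat.
  have Hle : c j <= c j.+1 by rewrite cS; lia.
  have E0 : p ++ flatten (mkseq d j) = pre u (c j) by rewrite -Hc0; exact: (Hpre j).
  have E1 : p ++ flatten (mkseq d j.+1) = pre u (c j.+1) by rewrite -Hc1; exact: (Hpre j.+1).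
  rewrite (pre_split u Hle) -E0 mkseqS -cats1 flatten_cat catA in E1.
  have := congr1 (drop (size (p ++ flatten (mkseq d j)))) E1.
  by rewrite /seg !drop_size_cat // => <- /=; rewrite cats0.
have Hpos j : 0 < size (d j).
  have [_ [Hcnt _]] := Hret j; move: Hcnt; case: (d j) => [|//] /=.
  by rewrite /count_occ subnn /= drop0 take_size eqxx.
have Hinc : incr c by move=> j; rewrite cS; have := Hpos j; lia.
have Hpref j : take (size v) (d j ++ v) = v by have [_ [_ ->]] := Hret j.
have Hin j t : t < size v -> t < size (d j) -> u (c j + t) = nth false v t.
  move=> Hv Ht2; rewrite -(Hpref j) nth_take // nth_cat Ht2 Hd nth_slice //.
  by move: Ht2; rewrite Hd size_slice.
have Hoc j : occurs_at u v (c j).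
  apply/occursP => t; move: {2}t (leqnn t) => t0; elim: t0 t j => [|t0 IH] t j Ht Hv.
    by apply: Hin => //; have := Hpos j; lia.
  case: (ltnP t (size (d j))) => Ht2; first exact: Hin.
  have -> : c j + t = c j.+1 + (t - size (d j)) by rewrite cS; lia.
  rewrite IH; [|have := Hpos j; lia|lia].
  by rewrite -{2}(Hpref j) nth_take // nth_cat ltnNge Ht2.
exists c; split=> //; split=> //.
move=> i; split; last by move=> [j <-].
move=> Hi.
have Hip : size p <= i by rewrite leqNgt; apply/negP => /Hpnot.
have [j Hj] := incr_cover Hinc (i - c 0).
have Ec0 : c 0 = size p by rewrite /c /= addn0.
rewrite Ec0 subnKC // in Hj.
case: (eqVneq (c j) i) => [E|Hne]; first by exists j.
exfalso.
have [_ [Hcnt _]] := Hret j.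
have Hrv : d j ++ v = slice u (c j) (c j.+1 + size v).
  rewrite Hd (@slice_split u (c j) (c j.+1) (c j.+1 + size v)); [|by apply: ltnW|lia].
  by move: (Hoc j.+1); rewrite occurs_slice => ->.
have Hq q : q <= size (d j) -> occurs_at u v (c j + q) ->
    take (size v) (drop q (d j ++ v)) == v.
  move=> Hq; rewrite occurs_slice => Ho.
  by rewrite Hrv slice_drop slice_take ?Ho //; rewrite cS; lia.
have Hsz : size (d j) = c j.+1 - c j by rewrite cS; lia.
have : 3 <= count_occ (d j ++ v) v.
  rewrite /count_occ size_cat addnK.
  apply: (count3 (x := 0) (y := i - c j) (z := size (d j))).
  - by apply: Hq; rewrite ?addn0.
  - by apply: Hq; [lia | rewrite subnKC //; lia].
  - by apply: Hq => //; rewrite Hsz subnKC //; apply: ltnW.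
  - lia.
  - lia.
  - lia.
by rewrite Hcnt.
Qed.

Definition mu (v : seq bool) (w : seq gen) :=
  size v * (size w).+1 + find (fun g => letter g == head false v) w.

Lemma c_id c : incr c -> (forall i, exists j, c j = i) -> forall j, c j = j.
Proof.
move=> Hinc Hs; elim=> [|j IH].
  have [j0 Hj0] := Hs 0; have := incr_le Hinc (leq0n j0); lia.
have [m Hm] := Hs j.+1.
have Hjm : j < m by rewrite -(incr_ltP Hinc) IH Hm.
have := incr_le Hinc Hjm; have := Hinc j; lia.
Qed.

Lemma core N : forall w' u v c, (forall x, has (fun g => letter g == x) w') ->
  fixed_point (phi_word w') u -> enum_occ u v c -> mu v w' < N ->
  exists psi, List.In psi (Cset w') /\ exists e, fixed_point psi e /\ samepat (seg u c) e.
Proof.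
elim: N => [|N IH] w' u v c Hhas Hfix Henum Hmu; first by [].
case: v Henum Hmu => [|x s] Henum Hmu.
  exists (phi_word w'); split; first by apply: (In_Cset (k := 0)).
  exists u; split=> //.
  have Hc := c_id (proj1 Henum) (fun i => proj1 (proj2 Henum i) (occurs_nil u i)).
  move=> j k; rewrite /seg !Hc /slice !subSnn /= ?addn0.
  rewrite /mkseq /= !addn0; by split; [case | move=> ->].
case: w' Hhas Hfix Hmu => [|g rest] Hhas Hfix Hmu.
  by have := Hhas true.
set a := letter g.
have [u' [Himg Hfix']] := desub Hfix.
have Hphi c0 : phi_gen g c0 = if c0 == a then [:: a] else [:: a; c0] by apply: phi_genE.
have Hhas' y : has (fun g => letter g == y) (rest ++ [:: g]).
  by rewrite -cyc_cons has_rot; apply: Hhas.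
have Hsize : size (rest ++ [:: g]) = size (g :: rest) by rewrite size_cat addn1.
have Hfind y : find (fun g => letter g == y) (rest ++ [:: g]) <= (size rest).+1.
  by apply: leq_trans (find_size _ _) _; rewrite size_cat addn1.
have Hfind2 y : find (fun g => letter g == y) (g :: rest) <= (size rest).+1 by apply: find_size.
have Fin : forall v' c', enum_occ u' v' c' -> mu v' (rest ++ [:: g]) < N ->
    samepat (seg u c) (seg u' c') ->
    exists psi, List.In psi (Cset (g :: rest)) /\ exists e, fixed_point psi e /\ samepat (seg u c) e.
  move=> v' c' He Hm Hp.
  have [psi [Hin [e [Hfe Hpe]]]] := IH _ _ _ _ Hhas' Hfix' He Hm.
  exists psi; split; first by apply: Cset_cyc; rewrite cyc_cons.
  exists e; split=> //; exact: samepat_trans Hp Hpe.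
case: (eqVneq x a) => Hxa.
  have [c' [He' Hp']] := T1 Hphi Himg (v := x :: s) isT ltac:(by rewrite /= Hxa) Henum.
  apply: (Fin _ _ He' _ Hp').
  have Hd := size_dec a (x :: s).
  move: Hmu; rewrite /mu Hsize; have := Hfind (head false (dec a (x :: s))).
  have := Hfind2 (head false (x :: s)); simpl in Hd |- *; nia.
have [He1 Hp1] := Sh Hphi Himg (v := x :: s) ltac:(by rewrite /=) isT Henum.
have [c' [He' Hp']] := T1 Hphi Himg (v := a :: x :: s) isT ltac:(by rewrite /=) He1.
apply: (Fin _ _ He' _ (samepat_trans Hp1 Hp')).
rewrite decE2 (negbTE Hxa).
have Hd := size_dec a s.
have Hxr : has (fun g => letter g == x) rest.
  have := Hhas x; rewrite /= -/a eq_sym (negbTE Hxa) //.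
move: Hmu; rewrite /mu Hsize /= find_cat Hxr -/a eq_sym (negbTE Hxa) /=.
set f := find _ rest.
have : f <= size rest by apply: find_size.
move: Hd; case: (s != [::]) => /= Hd; nia.
Qed.

Theorem claim25 (w : seq gen) :
  primitive (phi_word w) -> closed_under_derivation (Cset w).
Proof.
move=> Hp; split.
  move=> psi /In_map_iota_inv [k [Hk ->]]; split; first exact: prim_iter.
  by apply: subst_prim; apply: prim_iter.
move=> phi u v d /In_map_iota_inv [k [Hk ->]] Hfix Hfac Hder.
have [c [Henum Hd]] := derived_enum Hder.
have Hhas := has_letters (prim_iter k Hp).
have [psi [Hin [e [Hfe Hpat]]]] := core (N := (mu v (iter k cyc w)).+1) Hhas Hfix Henum (ltnSn _).
exists psi; split; first exact: Cset_iter Hin.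
pose jof x := epsilon (inhabits 0) (fun j => d j = x).
have Hj j : d (jof (d j)) = d j by apply: (epsilon_spec (inhabits 0) (fun i => d i = d j)); exists j.
exists (fun x => e (jof x)).
have Hs j : e (jof (d j)) = e j by apply/Hpat; rewrite -!Hd.
split.
  by move=> j k'; rewrite !Hs => /Hpat; rewrite -!Hd.
by apply: (fixed_point_wext (u1 := e)) => // j; rewrite Hs.
Qed.
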